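(* Let $1<\beta<2$, $N\ge5$, $h=(b-a)/N$, let $\gamma\in\mathbb R$ and $D_+,D_-\ge0$ with $D_++D_->0$. Then there is a constant $c>0$ independent of $h$ (one may take $c=c_1(D_++D_-)$ with $c_1$ independent of $h$) such that for every $\bm v\in V_h$ \[ (\delta^{\beta}_h\bm v,\bm v)\le -c\ln 2\,\|\bm v\|^2 . \]
   Context: Let $a<b$, $N$ a positive integer, $h=(b-a)/N$, grid $x_i=a+ih$. $V_h$ is the space of real grid functions $\bm v=(v_0,\dots,v_N)$ with $v_0=v_N=0$; $(\bm u,\bm v)=h\sum_{i=1}^{N-1}u_iv_i$, $\|\bm u\|=\sqrt{(\bm u,\bm u)}$. For $1<\beta<2$: $g^{(\beta)}_k=(-1)^k\binom{\beta}{k}$, $\lambda_1=\frac{\beta^2+3\beta+2}{12}$, $\lambda_0=\frac{4-\beta^2}{6}$, $\lambda_{-1}=\frac{\beta^2-3\beta+2}{12}$, $\omega^{(\beta)}_0=\lambda_1g^{(\beta)}_0$, $\omega^{(\beta)}_1=\lambda_1g^{(\beta)}_1+\lambda_0g^{(\beta)}_0$, $\omega^{(\beta)}_k=\lambda_1g^{(\beta)}_k+\lambda_0g^{(\beta)}_{k-1}+\lambda_{-1}g^{(\beta)}_{k-2}$ ($k\ge2$). For $\bm v\in V_h$, $1\le i\le N-1$: $(\delta^\beta_h\bm v)_i=\gamma\frac{v_{i+1}-v_{i-1}}{2h}+\frac{D_+}{h^\beta}\sum_{k=0}^{i+1}\omega^{(\beta)}_kv_{i-k+1}+\frac{D_-}{h^\beta}\sum_{k=0}^{N-i+1}\omega^{(\beta)}_kv_{i+k-1}$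 (entries with index $0$ or $N$ are zero), and $(\delta^\beta_h\bm v,\bm v)=h\sum_{i=1}^{N-1}(\delta^\beta_h\bm v)_iv_i$. *)

(* Defs.v *)
From Stdlib Require Import Reals Lra Lia.
Open Scope R_scope.

Fixpoint gbinom (b : R) (k : nat) : R :=
  match k with
  | O => 1
  | S k' => gbinom b k' * (b - INR k') / (INR k' + 1)
  end.

Definition gcoef (beta : R) (k : nat) : R := (-1) ^ k * gbinom beta k.

Definition lam1 (beta : R) : R := (beta ^ 2 + 3 * beta + 2) / 12.
Definition lam0 (beta : R) : R := (4 - beta ^ 2) / 6.
Definition lamm1 (beta : R) : R := (beta ^ 2 - 3 * beta + 2) / 12.

Definition omega (beta : R) (k : nat) : R :=
  match k with
  | O => lam1 beta * gcoef beta 0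
  | S O => lam1 beta * gcoef beta 1 + lam0 beta * gcoef beta 0
  | S (S j as k1) =>
      lam1 beta * gcoef beta k + lam0 beta * gcoef beta k1 + lamm1 beta * gcoef beta j
  end.

(* Grid functions are v : nat -> R; only v 0, ..., v N are relevant.
   v is in V_h iff v 0 = 0 and v N = 0. *)
Definition in_Vh (N : nat) (v : nat -> R) : Prop := v O = 0 /\ v N = 0.

Definition meshsize (a b : R) (N : nat) : R := (b - a) / INR N.

(* (delta_h^beta v)_i for 1 <= i <= N-1; sum_f_R0 f n = f 0 + ... + f n. *)
Definition delta_h (beta gamma Dp Dm a b : R) (N : nat) (v : nat -> R) (i : nat) : R :=
  let h := meshsize a b N in
  gamma * (v (S i) - v (i - 1)%nat) / (2 * h)
  + Dp / Rpower h beta * sum_f_R0 (fun k => omega beta k * v (S i - k)%nat) (S i)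
  + Dm / Rpower h beta * sum_f_R0 (fun k => omega beta k * v (i + k - 1)%nat) (S (N - i)).

(* discrete inner product (u, v) = h * sum_{i=1}^{N-1} u_i v_i *)
Definition ip (a b : R) (N : nat) (u v : nat -> R) : R :=
  meshsize a b N * sum_f_R0 (fun j => u (S j) * v (S j)) (N - 2).

Definition norm_h (a b : R) (N : nat) (v : nat -> R) : R := sqrt (ip a b N v v).

(* Main.v *)
Require Import Defs.
From Stdlib Require Import Reals Lra Lia Psatz.
Open Scope R_scope.

Section G.
Variable be : R.
Hypothesis Hbe : 1 < be < 2.

Lemma gS k : gcoef be (S k) = gcoef be k * (INR k - be) / (INR k + 1).
Proof.
  unfold gcoef; simpl gbinom; simpl pow.
  assert (INR k + 1 <> 0) by (pose proof (pos_INR k); lra). field; auto.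
Qed.

Lemma g0 : gcoef be 0 = 1. Proof. unfold gcoef; simpl; ring. Qed.
Lemma g1 : gcoef be 1 = - be. Proof. rewrite gS, g0; simpl; field. Qed.
Lemma g2 : gcoef be 2 = be * (be - 1) / 2. Proof. rewrite gS, g1; simpl; field. Qed.
Lemma g3 : gcoef be 3 = be * (be - 1) * (2 - be) / 6.
Proof. rewrite gS, g2; simpl; field. Qed.

Lemma g_pos k : (2 <= k)%nat -> 0 < gcoef be k.
Proof.
  induction 1.
  - rewrite g2; nra.
  - rewrite gS. apply le_INR in H. simpl in H.
    assert (0 < INR m - be) by lra. pose proof (pos_INR m).
    apply Rdiv_lt_0_compat; [apply Rmult_lt_0_compat|]; lra.
Qed.

Definition G n := sum_f_R0 (gcoef be) n.

Lemma G_form n : G n = - (INR n + 1) * gcoef be (S n) / be.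
Proof.
  induction n.
  - unfold G; simpl. rewrite g1, g0. field. lra.
  - unfold G in *. rewrite tech5, IHn. rewrite (gS (S n)). rewrite S_INR.
    rewrite gS. pose proof (pos_INR n).
    field. split; lra.
Qed.

Definition W n := sum_f_R0 (omega be) n.

Lemma W_form j : W (S (S j)) = lam1 be * G (S (S j)) + lam0 be * G (S j) + lamm1 be * G j.
Proof.
  induction j.
  - unfold W, G; simpl. ring.
  - unfold W, G in *. rewrite tech5, IHj. rewrite (tech5 _ (S (S j))), (tech5 _ (S j)), (tech5 _ j).
    simpl omega. ring.
Qed.


Lemma W_expl j : W (S (S j)) = - (gcoef be (S j) / be) *
  (lam1 be * (INR j + 1 - be) * (INR j + 2 - be) / (INR j + 2)
   + lam0 be * (INR j + 1 - be) + lamm1 be * (INR j + 1)).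
Proof.
  rewrite W_form, !G_form. rewrite (gS (S (S j))), (gS (S j)). rewrite !S_INR.
  pose proof (pos_INR j). field. split; lra.
Qed.

Lemma B_bound (J : R) : 3 <= J ->
  (J + 2) / 8 <= lam1 be * (J + 1 - be) * (J + 2 - be) / (J + 2)
   + lam0 be * (J + 1 - be) + lamm1 be * (J + 1).
Proof.
  intro HJ. unfold lam1, lam0, lamm1.
  assert (H2: 0 < J + 2) by lra.
  apply (Rmult_le_reg_r (12 * (J+2))). lra.
  replace ((J + 2) / 8 * (12 * (J + 2))) with (3/2 * (J+2)^2) by (field; lra).
  replace (((be ^ 2 + 3 * be + 2) / 12 * (J + 1 - be) * (J + 2 - be) / (J + 2) +
   (4 - be ^ 2) / 6 * (J + 1 - be) + (be ^ 2 - 3 * be + 2) / 12 * (J + 1)) *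
  (12 * (J + 2))) with ((be ^ 2 + 3 * be + 2) * (J + 1 - be) * (J + 2 - be) +
   2 * (4 - be ^ 2) * (J+2) * (J + 1 - be) + (be ^ 2 - 3 * be + 2) * (J+2) * (J + 1)) by (field; lra).
  set (s := be - 1). set (t := J - 3).
  replace be with (1 + s) by (unfold s; ring). replace J with (3 + t) by (unfold t; ring).
  assert (0 < s < 1) by (unfold s; lra). assert (0 <= t) by (unfold t; lra).
  match goal with |- ?L <= ?R => assert (R - L = 249/2 - 92*s - 7*s^2 + 8*s^3 + s^4 + t*(75 - 24*s - 6*s^2) + 21/2*t^2) by field end.
  assert (0 <= s^3) by (apply pow_le; lra). assert (0 <= s^4) by (apply pow_le; lra).
  assert (0 <= t*(75 - 24*s - 6*s^2)) by (apply Rmult_le_pos; nra).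
  nra.
Qed.

Lemma W_neg j : (3 <= j)%nat -> gcoef be (S j) * (INR j + 2) / (8 * be) <= - W (S (S j)).
Proof.
  intro Hj. pose proof (g_pos (S j) ltac:(lia)) as Hg. rewrite W_expl. apply le_INR in Hj. simpl in Hj.
  pose proof (B_bound (INR j) ltac:(lra)) as HB.
  set (B := lam1 be * (INR j + 1 - be) * (INR j + 2 - be) / (INR j + 2) +
        lam0 be * (INR j + 1 - be) + lamm1 be * (INR j + 1)) in *.
  replace (- (- (gcoef be (S j) / be) * B)) with (gcoef be (S j) / be * B) by ring.
  replace (gcoef be (S j) * (INR j + 2) / (8 * be)) with (gcoef be (S j) / be * ((INR j + 2)/8)) by (field; lra).
  apply Rmult_le_compat_l; [|exact HB]. apply Rlt_le, Rdiv_lt_0_compat; lra.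
Qed.


Lemma exp_le x y : x <= y -> exp x <= exp y.
Proof. intro H; destruct (Req_dec x y); [subst; lra|]. left; apply exp_increasing; lra. Qed.

Lemma ln_ge u : 1 < u -> 1 / u <= ln (u / (u - 1)).
Proof.
  intro Hu.
  assert (E : exp (1/u) <= u / (u-1)).
  { pose proof (exp_ineq1_le (- (1/u))) as H.
    assert (Hp : exp (1/u) * exp (- (1/u)) = 1) by (rewrite <- exp_plus; replace (1/u + - (1/u)) with 0 by ring; apply exp_0).
    pose proof (exp_pos (1/u)).
    assert (0 < 1 + - (1/u)).
    { assert (1/u < 1). { apply (Rmult_lt_reg_r u); [lra|]. field_simplify; lra. } lra. }
    apply (Rmult_le_reg_r ((u-1)/u)). apply Rdiv_lt_0_compat; lra.
    replace (u / (u-1) * ((u-1)/u)) with 1 by (field; lra).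
    apply Rle_trans with (exp (1/u) * exp (- (1/u))); [|lra].
    apply Rmult_le_compat_l; [lra|].
    replace ((u-1)/u) with (1 + - (1/u)) by (field; lra). exact H. }
  destruct (Rle_lt_dec (1/u) (ln (u/(u-1)))); auto.
  exfalso. apply exp_increasing in r. rewrite exp_ln in r.
  lra. apply Rdiv_lt_0_compat; lra.
Qed.

Lemma rp_ge u r : 1 < u -> 0 <= r -> (1 + r / (2 * u)) ^ 2 <= Rpower (u / (u - 1)) r.
Proof.
  intros Hu Hr. unfold Rpower.
  apply Rle_trans with (exp (r * (1/u))).
  - replace (r * (1/u)) with (r/(2*u) + r/(2*u)) by (field; lra).
    rewrite exp_plus. simpl. rewrite Rmult_1_r.
    pose proof (exp_ineq1_le (r/(2*u))).
    assert (0 <= r/(2*u)) by (apply Rmult_le_pos; [lra| left; apply Rinv_0_lt_compat; lra]).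
    apply Rmult_le_compat; lra.
  - apply exp_le. apply Rmult_le_compat_l; auto. apply ln_ge; auto.
Qed.

Lemma q_step m : (4 <= m)%nat ->
  gcoef be m * Rpower (INR m - 3) (be + 1) <= gcoef be (S m) * Rpower (INR m - 2) (be + 1).
Proof.
  intro Hm. pose proof (g_pos m ltac:(lia)) as Hg.
  apply le_INR in Hm. simpl in Hm.
  set (u := INR m - 2). assert (Hu : 2 <= u) by (unfold u; lra).
  replace (INR m - 3) with (u - 1) by (unfold u; ring).
  assert (Esp : Rpower u (be+1) = Rpower (u-1) (be+1) * Rpower (u/(u-1)) (be+1)).
  { rewrite Rpower_mult_distr; [| lra | apply Rdiv_lt_0_compat; lra]. f_equal; field; lra. }
  rewrite Esp.
  rewrite gS.
  pose proof (rp_ge u (be+1) ltac:(lra) ltac:(lra)) as HX.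
  set (X := Rpower (u / (u-1)) (be + 1)) in *.
  set (Y := Rpower (u - 1) (be + 1)).
  assert (HY : 0 < Y) by (unfold Y, Rpower; apply exp_pos).
  replace (INR m) with (u + 2) by (unfold u; ring).
  assert (Hkey : u + 3 <= (u + 2 - be) * X).
  { apply Rle_trans with ((u + 2 - be) * (1 + (be+1) / (2*u))^2).
    - apply (Rmult_le_reg_r (4 * u^2)). nra.
      replace ((u + 2 - be) * (1 + (be + 1) / (2 * u)) ^ 2 * (4 * u ^ 2)) with
        ((u + 2 - be) * (2*u + be + 1)^2) by (field; lra).
      assert (E2 : (u + 2 - be) * (2*u + be + 1)^2 - (u+3) * (4*u^2) = 4*u*(be+1)*(2-be) + (be+1)^2*(u+2-be)) by ring.
      assert (0 <= 4*u*(be+1)*(2-be)) by (repeat apply Rmult_le_pos; lra).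
      assert (0 <= (be+1)^2*(u+2-be)) by (apply Rmult_le_pos; [apply pow2_ge_0|lra]).
      lra.
    - apply Rmult_le_compat_l; [lra | exact HX]. }
  replace (gcoef be m * (u + 2 - be) / (u + 2 + 1) * (Y * X)) with
     (gcoef be m * Y * ((u + 2 - be) * X / (u + 3))) by (field; lra).
  rewrite <- (Rmult_1_r (gcoef be m * Y)) at 1.
  apply Rmult_le_compat_l. apply Rmult_le_pos; lra.
  apply (Rmult_le_reg_r (u+3)); [lra|]. field_simplify; lra.
Qed.


Lemma q_all m : (4 <= m)%nat -> gcoef be 4 <= gcoef be m * Rpower (INR m - 3) (be + 1).
Proof.
  induction 1.
  - replace (INR 4 - 3) with 1 by (simpl; ring). unfold Rpower. rewrite ln_1, Rmult_0_r, exp_0. lra.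
  - eapply Rle_trans; [apply IHle|]. rewrite S_INR. replace (INR m + 1 - 3) with (INR m - 2) by ring.
    apply q_step; lia.
Qed.

Lemma g_lower m : (4 <= m)%nat -> gcoef be 4 <= gcoef be m * Rpower (INR m) (be + 1).
Proof.
  intro Hm. eapply Rle_trans; [apply (q_all m Hm)|].
  pose proof (g_pos m ltac:(lia)). apply le_INR in Hm. simpl in Hm.
  apply Rmult_le_compat_l; [lra|]. apply Rle_Rpower_l; lra.
Qed.

Definition kap := gcoef be 4 / (8 * be).

Lemma kap_pos : 0 < kap.
Proof. unfold kap. apply Rdiv_lt_0_compat; [apply g_pos; lia | lra]. Qed.

Lemma W_rate N : (5 <= N)%nat -> W N * Rpower (INR N) be <= - kap.
Proof.
  intro HN. destruct N as [|[|j]]; try lia.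
  assert (Hj : (3 <= j)%nat) by lia.
  pose proof (W_neg j Hj) as H1.
  pose proof (g_lower (S j) ltac:(lia)) as H2.
  assert (HP : 0 < Rpower (INR (S (S j))) be) by (unfold Rpower; apply exp_pos).
  assert (E : INR (S (S j)) = INR j + 2) by (rewrite !S_INR; ring).
  assert (E2 : Rpower (INR (S (S j))) (be + 1) = Rpower (INR (S (S j))) be * (INR j + 2)).
  { rewrite Rpower_plus, Rpower_1, E; auto. pose proof (pos_INR j); lra. }
  assert (H3 : Rpower (INR (S j)) (be+1) <= Rpower (INR (S (S j))) (be+1)).
  { apply Rle_Rpower_l; [lra|]. split. apply lt_0_INR; lia. apply le_INR; lia. }
  pose proof (g_pos (S j) ltac:(lia)) as Hg.
  unfold kap.
  apply Rle_trans with (- (gcoef be (S j) * (INR j + 2) / (8 * be)) * Rpower (INR (S (S j))) be).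
  - apply Rmult_le_compat_r; lra.
  - replace (- (gcoef be (S j) * (INR j + 2) / (8 * be)) * Rpower (INR (S (S j))) be) with
      (- (gcoef be (S j) * Rpower (INR (S (S j))) (be + 1) / (8*be))) by (rewrite E2; field; lra).
    apply Ropp_le_contravar. unfold Rdiv. apply Rmult_le_compat_r.
    left; apply Rinv_0_lt_compat; lra.
    eapply Rle_trans; [apply H2|]. apply Rmult_le_compat_l; lra.
Qed.


Lemma om02 : 0 <= omega be 0 + omega be 2.
Proof.
  simpl omega. rewrite g2, g1, g0. unfold lam1, lam0, lamm1.
  set (s := be - 1). replace be with (1 + s) by (unfold s; ring).
  assert (0 < s < 1) by (unfold s; lra).
  match goal with |- _ <= ?R => assert (R = (5*s + 27/2*s^2 + 5*s^3 + 1/2*s^4)/12) by field end.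
  assert (0 <= s^3) by (apply pow_le; lra). assert (0 <= s^4) by (apply pow_le; lra). nra.
Qed.

Lemma om3 : 0 <= omega be 3.
Proof.
  simpl omega. rewrite g3, g2, g1. unfold lam1, lam0, lamm1.
  set (s := be - 1). replace be with (1 + s) by (unfold s; ring).
  assert (0 < s < 1) by (unfold s; lra).
  assert (0 < 1 + s) by lra. assert (0 < 1 - s) by lra.
  assert (0 <= (1+s)*s*(1-s)) by (repeat apply Rmult_le_pos; lra).
  assert (0 <= (1+s)*s) by (repeat apply Rmult_le_pos; lra).
  assert (0 <= ((1+s)^2 + 3*(1+s) + 2)) by nra.
  assert (0 <= (4 - (1+s)^2)) by nra.
  assert (0 <= -((1 + s) ^ 2 - 3 * (1 + s) + 2)) by nra.
  replace (1 + s - 1) with s by ring. replace (2 - (1+s)) with (1 - s) by ring.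
  assert (0 <= ((1 + s) ^ 2 + 3 * (1 + s) + 2) * ((1 + s) * s * (1 - s))) by (apply Rmult_le_pos; lra).
  assert (0 <= (4 - (1 + s) ^ 2) * ((1 + s) * s)) by (apply Rmult_le_pos; lra).
  assert (0 <= -((1 + s) ^ 2 - 3 * (1 + s) + 2) * (1+s)) by (apply Rmult_le_pos; lra).
  lra.
Qed.

Lemma om_ge4 j : 0 <= omega be (S (S (S (S j)))).
Proof.
  change (omega be (S (S (S (S j))))) with
    (lam1 be * gcoef be (S (S (S (S j)))) + lam0 be * gcoef be (S (S (S j))) + lamm1 be * gcoef be (S (S j))).
  rewrite (gS (S (S (S j)))), (gS (S (S j))).
  pose proof (g_pos (S (S j)) ltac:(lia)) as Hg.
  set (x := gcoef be (S (S j))) in *.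
  rewrite !S_INR. set (J := INR j). assert (0 <= J) by apply pos_INR.
  unfold lam1, lam0, lamm1.
  match goal with |- _ <= ?R => assert (R = x / (12 * (J+3) * (J+4)) *
    ((be^2+3*be+2)*(J+2-be)*(J+3-be) + 2*(4-be^2)*(J+4)*(J+2-be) + (be^2-3*be+2)*(J+4)*(J+3)))
    by (field; lra) end.
  rewrite H0. apply Rmult_le_pos.
  - apply Rmult_le_pos; [lra|]. left; apply Rinv_0_lt_compat. nra.
  - set (s := be - 1). replace be with (1 + s) by (unfold s; ring).
    assert (0 < s < 1) by (unfold s; lra).
    match goal with |- _ <= ?R => assert (R = (1-s)^2*(s+6)^2 + J*(48 - 30*s - 6*s^2) + 12*J^2) by ring end.
    rewrite H2. assert (0 <= J*(48 - 30*s - 6*s^2)) by (apply Rmult_le_pos; nra).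
    assert (0 <= (1-s)^2*(s+6)^2) by (apply Rmult_le_pos; apply pow2_ge_0). nra.
Qed.


End G.

Lemma telesc (f : nat -> R) n : sum_f_R0 (fun j => f (S j) - f j) n = f (S n) - f 0%nat.
Proof. induction n; simpl; [ring|]. rewrite IHn. ring. Qed.

Lemma sum_ext_zero (f : nat -> R) n m : (n <= m)%nat -> (forall k, (n < k <= m)%nat -> f k = 0) ->
  sum_f_R0 f n = sum_f_R0 f m.
Proof.
  induction 1; intro H0; auto.
  rewrite tech5, <- IHle. rewrite H0; [ring|lia]. intros; apply H0; lia.
Qed.

Lemma sum_swap (f : nat -> nat -> R) n m :
  sum_f_R0 (fun i => sum_f_R0 (fun k => f i k) m) n = sum_f_R0 (fun k => sum_f_R0 (fun i => f i k) n) m.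
Proof.
  induction n; simpl; auto. rewrite IHn, <- sum_plus. apply sum_eq; intros; simpl; auto.
Qed.

Lemma sum_rev (f : nat -> R) n : sum_f_R0 f n = sum_f_R0 (fun j => f (n - j)%nat) n.
Proof.
  revert f; induction n; intro f; [simpl; auto|].
  rewrite (decomp_sum f (S n)) by lia. simpl pred. rewrite (IHn (fun i => f (S i))).
  rewrite tech5. rewrite Nat.sub_diag. rewrite Rplus_comm. f_equal. apply sum_eq; intros. f_equal. lia.
Qed.

Lemma sum_shift_le (U : nat -> R) n : (forall i, 0 <= U i) -> U 0%nat = 0 ->
  forall d, sum_f_R0 (fun j => U (S j - d)%nat) n <= sum_f_R0 (fun j => U (S j)) n.
Proof.
  intros Hp H0 d. induction d.
  - apply Req_le. apply sum_eq; intros; f_equal; lia.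
  - eapply Rle_trans; [|apply IHd].
    set (U' := fun i => U (i - d)%nat).
    assert (E1 : sum_f_R0 (fun j => U (S j - S d)%nat) n = sum_f_R0 U' n) by (apply sum_eq; intros; unfold U'; f_equal).
    assert (E2 : sum_f_R0 (fun j => U (S j - d)%nat) n = sum_f_R0 (fun j => U' (S j)) n) by (apply sum_eq; intros; unfold U'; f_equal).
    rewrite E1, E2.
    assert (sum_f_R0 (fun j => U' (S j) - U' j) n = U' (S n) - U' 0%nat) by apply telesc.
    rewrite minus_sum in H. replace (U' 0%nat) with 0 in H by (unfold U'; simpl; auto).
    assert (0 <= U' (S n)) by apply Hp. lra.
Qed.

Section Q.
Variable be : R.
Hypothesis Hbe : 1 < be < 2.

Definition Sv N (v : nat -> R) := sum_f_R0 (fun j => v (S j) * v (S j)) (N - 2).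
Definition Qp N (v : nat -> R) := sum_f_R0 (fun j =>
  sum_f_R0 (fun k => omega be k * v (S (S j) - k)%nat) (S (S j)) * v (S j)) (N - 2).
Definition Qm N (v : nat -> R) := sum_f_R0 (fun j =>
  sum_f_R0 (fun k => omega be k * v (S j + k - 1)%nat) (S (N - S j)) * v (S j)) (N - 2).
Definition E n (v : nat -> R) k := sum_f_R0 (fun j => v (S (S j) - k)%nat * v (S j)) n.

Lemma E_le n v d : v 0%nat = 0 -> E n v (S d) <= sum_f_R0 (fun j => v (S j) * v (S j)) n.
Proof.
  intro H0. unfold E.
  apply Rle_trans with (sum_f_R0 (fun j => (v (S j - d)%nat * v (S j - d)%nat + v (S j) * v (S j)) / 2) n).
  - apply sum_Rle; intros. simpl. pose proof (pow2_ge_0 (v (S n0 - d)%nat - v (S n0))). simpl in H1. lra.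
  - assert (H := sum_shift_le (fun i => v i * v i) n ltac:(intros; apply Rle_0_sqr) ltac:(cbv beta; rewrite H0; ring) d).
    cbv beta in H.
    replace (sum_f_R0 (fun j => (v (S j - d)%nat * v (S j - d)%nat + v (S j) * v (S j)) / 2) n) with
      ((sum_f_R0 (fun j => v (S j - d)%nat * v (S j - d)%nat) n + sum_f_R0 (fun j => v (S j) * v (S j)) n) / 2).
    + lra.
    + rewrite <- sum_plus. unfold Rdiv. rewrite Rmult_comm, scal_sum. apply sum_eq; intros; ring.
Qed.

Lemma E0_E2 n v : v 0%nat = 0 -> v (S (S n)) = 0 -> E n v 0 = E n v 2.
Proof.
  intros H0 HN. unfold E.
  assert (H := telesc (fun j => v (S j) * v j) n). simpl in H. rewrite HN, H0 in H.
  rewrite minus_sum in H.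
  replace (sum_f_R0 (fun j => v (S (S j) - 0)%nat * v (S j)) n) with (sum_f_R0 (fun j => v (S (S j)) * v (S j)) n) by (apply sum_eq; intros; f_equal).
  replace (sum_f_R0 (fun j => v (S (S j) - 2)%nat * v (S j)) n) with (sum_f_R0 (fun j => v (S j) * v j) n) by (apply sum_eq; intros; simpl; rewrite Nat.sub_0_r; ring).
  lra.
Qed.

Lemma Qp_E N v : (2 <= N)%nat -> v 0%nat = 0 ->
  Qp N v = sum_f_R0 (fun k => omega be k * E (N - 2) v k) N.
Proof.
  intros HN H0. unfold Qp, E.
  rewrite (sum_eq _ (fun j => sum_f_R0 (fun k => omega be k * (v (S (S j) - k)%nat * v (S j))) N)).
  - rewrite sum_swap. apply sum_eq; intros. rewrite scal_sum. apply sum_eq; intros; ring.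
  - intros j Hj. rewrite Rmult_comm, scal_sum.
    rewrite (sum_ext_zero _ (S (S j)) N); [| lia |].
    + apply sum_eq; intros; ring.
    + intros k Hk. replace (S (S j) - k)%nat with 0%nat by lia. rewrite H0. ring.
Qed.

Lemma Qp_bound N v : (5 <= N)%nat -> v 0%nat = 0 -> v N = 0 -> Qp N v <= W be N * Sv N v.
Proof.
  intros HN H0 HvN. rewrite Qp_E by (auto; lia).
  destruct N as [|[|[|n3]]]; try lia.
  set (n := (S (S (S n3)) - 2)%nat).
  assert (Hn : S (S n) = S (S (S n3))) by (unfold n; lia).
  unfold Sv, W. fold n. set (Sq := sum_f_R0 (fun j => v (S j) * v (S j)) n).
  rewrite !(decomp_sum _ (S (S (S n3)))) by lia. simpl pred.
  rewrite !(decomp_sum _ (S (S n3))) by lia. simpl pred.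
  rewrite !(decomp_sum _ (S n3)) by lia. simpl pred.
  assert (E1 : E n v 1 = Sq) by (unfold E, Sq; apply sum_eq; intros; f_equal; f_equal; lia).
  assert (E02 : E n v 0 = E n v 2) by (apply E0_E2; auto; rewrite Hn; auto).
  assert (E2 : E n v 2 <= Sq) by (apply E_le; auto).
  assert (Hrest : sum_f_R0 (fun i => omega be (S (S (S i))) * E n v (S (S (S i)))) n3 <=
                  sum_f_R0 (fun i => omega be (S (S (S i)))) n3 * Sq).
  { rewrite Rmult_comm, scal_sum. apply sum_Rle; intros i Hi.
    apply Rmult_le_compat_l. destruct i; [apply om3; auto | apply om_ge4; auto].
    apply E_le; auto. }
  pose proof (om02 be Hbe).
  rewrite E02, E1.
  assert (omega be 0 * E n v 2 + omega be 2 * E n v 2 <= omega be 0 * Sq + omega be 2 * Sq).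
  { rewrite <- !Rmult_plus_distr_r. apply Rmult_le_compat_l; auto. }
  lra.
Qed.


Lemma Qm_eq N v : (2 <= N)%nat -> Qm N v = Qp N (fun i => v (N - i)%nat).
Proof.
  intro HN. unfold Qm, Qp. rewrite (sum_rev _ (N - 2)).
  apply sum_eq; intros j Hj.
  replace (N - (S (N - 2 - j)))%nat with (S j) by lia.
  f_equal.
  replace (S (S (N - 2 - j))) with (S (N - S j)) by lia.
  apply sum_eq; intros k Hk. f_equal. f_equal. lia. f_equal. lia.
Qed.

Lemma Sv_eq N v : (2 <= N)%nat -> Sv N (fun i => v (N - i)%nat) = Sv N v.
Proof.
  intro HN. unfold Sv. rewrite (sum_rev _ (N - 2)).
  apply sum_eq; intros j Hj. replace (N - S (N - 2 - j))%nat with (S j) by lia. ring.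
Qed.

Lemma Qm_bound N v : (5 <= N)%nat -> v 0%nat = 0 -> v N = 0 -> Qm N v <= W be N * Sv N v.
Proof.
  intros HN H0 H1. rewrite Qm_eq by lia. rewrite <- (Sv_eq N v) by lia.
  apply Qp_bound; auto. rewrite Nat.sub_0_r; auto. rewrite Nat.sub_diag; auto.
Qed.

End Q.

Theorem theorem1 :
  forall (a b beta gamma Dp Dm : R),
    a < b -> 1 < beta < 2 -> 0 <= Dp -> 0 <= Dm -> 0 < Dp + Dm ->
    exists c : R, 0 < c /\
      forall (N : nat) (v : nat -> R),
        (5 <= N)%nat -> in_Vh N v ->
        ip a b N (delta_h beta gamma Dp Dm a b N v) v
          <= - c * ln 2 * (norm_h a b N v) ^ 2.
Proof.
  intros a b be ga Dp Dm Hab Hbe HDp HDm HD.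
  set (K := Rpower (b - a) be).
  assert (HK : 0 < K) by (unfold K, Rpower; apply exp_pos).
  assert (Hl2 : / 2 < ln 2) by apply ln_lt_2.
  pose proof (kap_pos be Hbe) as Hkap.
  exists ((Dp + Dm) * kap be / (K * ln 2)). split.
  { apply Rdiv_lt_0_compat; [apply Rmult_lt_0_compat; lra| apply Rmult_lt_0_compat; lra]. }
  intros N v HN [H0 H1].
  assert (HNp : 0 < INR N) by (apply lt_0_INR; lia).
  set (h := meshsize a b N).
  assert (Hh : 0 < h) by (unfold h, meshsize; apply Rdiv_lt_0_compat; lra).
  set (P := Rpower h be).
  assert (HP : 0 < P) by (unfold P, Rpower; apply exp_pos).
  set (RN := Rpower (INR N) be).
  assert (HPR : P * RN = K).
  { unfold P, RN, K. rewrite Rpower_mult_distr by lra. f_equal. unfold h, meshsize. field. lra. }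
  pose proof (W_rate be Hbe N HN) as HW. fold RN in HW.
  set (Sq := Sv N v).
  assert (HS : 0 <= Sq) by (unfold Sq, Sv; apply cond_pos_sum; intros; apply Rle_0_sqr).
  assert (Hnorm : norm_h a b N v ^ 2 = h * Sq).
  { unfold norm_h. rewrite pow2_sqrt. reflexivity. unfold ip. fold h. apply Rmult_le_pos; [lra | exact HS]. }
  rewrite Hnorm.
  assert (Hsplit : ip a b N (delta_h be ga Dp Dm a b N v) v =
     h * (ga / (2 * h) * sum_f_R0 (fun j => (v (S (S j)) - v j) * v (S j)) (N - 2)
          + Dp / P * Qp be N v + Dm / P * Qm be N v)).
  { unfold ip. fold h. f_equal. unfold Qp, Qm.
    rewrite !scal_sum. rewrite <- !sum_plus. apply sum_eq; intros j Hj.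
    unfold delta_h. fold h. fold P. replace (S j - 1)%nat with j by lia. field. split; lra. }
  assert (HT : sum_f_R0 (fun j => (v (S (S j)) - v j) * v (S j)) (N - 2) = 0).
  { pose proof (telesc (fun i => v (S i) * v i) (N - 2)) as T. cbv beta in T.
    transitivity (sum_f_R0 (fun j => v (S (S j)) * v (S j) - v (S j) * v j) (N - 2)).
    apply sum_eq; intros; ring.
    rewrite T. replace (S (N - 2)) with (N - 1)%nat by lia.
    replace (S (N - 1)) with N by lia. rewrite H0, H1. ring. }
  rewrite Hsplit, HT.
  pose proof (Qp_bound be Hbe N v HN H0 H1) as Hp.
  pose proof (Qm_bound be Hbe N v HN H0 H1) as Hm.
  fold Sq in Hp, Hm.
  set (Wn := W be N) in *.
  assert (X1 : Dp * Qp be N v + Dm * Qm be N v <= (Dp + Dm) * Wn * Sq).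
  { assert (Dp * Qp be N v <= Dp * (Wn * Sq)) by (apply Rmult_le_compat_l; auto).
    assert (Dm * Qm be N v <= Dm * (Wn * Sq)) by (apply Rmult_le_compat_l; auto). nra. }
  replace (h * (ga / (2 * h) * 0 + Dp / P * Qp be N v + Dm / P * Qm be N v)) with
    (h / P * (Dp * Qp be N v + Dm * Qm be N v)) by (field; lra).
  apply Rle_trans with (h / P * ((Dp + Dm) * Wn * Sq)).
  { apply Rmult_le_compat_l; auto. left; apply Rdiv_lt_0_compat; lra. }
  replace (h / P * ((Dp + Dm) * Wn * Sq)) with (h * (Dp + Dm) * Sq / K * (Wn * RN)).
  2:{ assert (HRN : RN <> 0) by (unfold RN, Rpower; apply Rgt_not_eq, exp_pos).
      rewrite <- HPR. field. repeat split; try lra; auto. }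
  replace (- ((Dp + Dm) * kap be / (K * ln 2)) * ln 2 * (h * Sq)) with (h * (Dp + Dm) * Sq / K * (- kap be))
    by (field; split; lra).
  apply Rmult_le_compat_l; auto.
  apply Rmult_le_pos; [apply Rmult_le_pos; [apply Rmult_le_pos|]|]; try lra.
  left; apply Rinv_0_lt_compat; lra.
Qed.
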